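(* Let $k\ge t+3$ and $n\ge (k-t)(k-t+1)+t$, and let $\mathcal F\subseteq\binom{[n]}{k}$ be a $t$-intersecting family; write $\tau=\tau_t(\mathcal F)$. Then $$|\mathcal F|\le (k-t+1)^{\tau-t}\binom{\tau}{t}\binom{n-\tau}{k-\tau}.$$ Moreover, if $\mathcal B\subseteq\mathcal F$ is such that no member of $\mathcal B$ contains any member of $\mathcal T_t(\mathcal F)$, then $$|\mathcal B|\le (k-t+1)^{\tau-t+1}\binom{\tau}{t}\binom{n-\tau-1}{k-\tau-1},$$ with the convention $\binom{m}{-1}=0$.
   Context: A family is $t$-intersecting if any two members meet in at least $t$ elements. A $t$-cover of $\mathcal F$ is a set $S\subseteq[n]$ with $|S\cap F|\ge t$ for all $F\in\mathcal F$; $\tau_t(\mathcal F)$ is the minimum size of a $t$-cover, and $\mathcal T_t(\mathcal F)$ is the set of all $t$-covers of $\mathcal F$ of size $\tau_t(\mathcal F)$. *)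

(* Defs.v *)
From mathcomp Require Import all_boot all_order all_algebra.
Set Implicit Arguments. Unset Strict Implicit. Unset Printing Implicit Defensive.

Definition t_intersecting (n t : nat) (F : {set {set 'I_n}}) : bool :=
  [forall A in F, forall B in F, t <= #|A :&: B|].

Definition t_cover (n t : nat) (F : {set {set 'I_n}}) (S : {set 'I_n}) : bool :=
  [forall A in F, t <= #|S :&: A|].

(* tau_t(F): minimum size of a t-cover (default n if none exists, which
   cannot happen when all members have size >= t since [set: 'I_n] is one). *)
Definition tau_t (n t : nat) (F : {set {set 'I_n}}) : nat :=
  \big[minn/n]_(S : {set 'I_n} | t_cover t F S) #|S|.

Definition T_t (n t : nat) (F : {set {set 'I_n}}) : {set {set 'I_n}} :=
  [set S | t_cover t F S & #|S| == tau_t t F].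

Definition binz (m : nat) (j : int) : nat :=
  match j with
  | Posz j' => 'C(m, j')
  | Negz _ => 0
  end.

(* Main.v *)
Require Import Defs.
From mathcomp Require Import all_boot all_order all_algebra.
From mathcomp Require Import zify.

Lemma card_sum (T : finType) (G : {set T}) (P : pred T) :
  #|[set A in G | P A]| = \sum_(A in G) (P A : nat).
Proof.
rewrite -sum1_card big_mkcond [RHS]big_mkcond /=.
apply: eq_bigr => A _; rewrite !inE; by case: (A \in G); case: (P A).
Qed.

Lemma dcount (T U : finType) (D : {set T}) (G : {set U}) (R : T -> U -> bool) :
  \sum_(X in D) #|[set A in G | R X A]| = \sum_(A in G) #|[set X in D | R X A]|.
Proof.
under eq_bigr => X _ do rewrite card_sum.
under [RHS]eq_bigr => A _ do rewrite card_sum.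
exact: exchange_big.
Qed.

Lemma arith k t j N M : j < t -> t <= k -> (t - j) * N <= (k - j) * M ->
  N <= (k - t + 1) * M.
Proof.
move=> jt tk H.
have H2 : (k - j) * M <= (t - j) * ((k - t + 1) * M).
  rewrite mulnA leq_mul2r; apply/orP; right. nia.
have := leq_trans H H2. rewrite leq_pmul2l //. lia.
Qed.

Lemma branch n k t (G : {set {set 'I_n}}) (S A : {set 'I_n}) M :
 #|A| = k -> #|S :&: A| < t -> t <= k ->
 (forall B, B \in G -> S \subset B -> t <= #|B :&: A|) ->
 (forall x, x \notin S -> #|[set B in G | (x |: S) \subset B]| <= M) ->
 #|[set B in G | S \subset B]| <= (k - t + 1) * M.
Proof.
move=> hA hj htk hG hM.
set Fs := [set B in G | S \subset B].
apply: (@arith k t #|S :&: A|) => //.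
have H1 : (t - #|S :&: A|) * #|Fs| <= \sum_(B in Fs) #|[set x in A :\: S | x \in B]|.
  rewrite mulnC -sum_nat_const; apply: leq_sum => B; rewrite inE => /andP [BG SB].
  have e : [set x in A :\: S | x \in B] = (B :&: A) :\: S.
    by apply/setP => x; rewrite !inE; case: (x \in A); case: (x \in B); case: (x \in S).
  rewrite e.
  have := hG B BG SB; rewrite -(cardsID S (B :&: A)).
  have : #|B :&: A :&: S| <= #|S :&: A|.
    apply: subset_leq_card; apply/subsetP => x; rewrite !inE.
    by case: (x \in A); case: (x \in B); case: (x \in S); rewrite ?andbF ?andbT.
  lia.
apply: (leq_trans H1); rewrite -dcount.
have -> : k - #|S :&: A| = #|A :\: S| by rewrite -hA -(cardsID S A) setIC; lia.
rewrite -sum_nat_const; apply: leq_sum => x; rewrite inE => /andP [xS _].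
apply: leq_trans (hM x xS); apply: subset_leq_card; apply/subsetP => B.
by rewrite !inE subUset sub1set; case: (B \in G); case: (S \subset B); case: (x \in B).
Qed.

Lemma grow n k t (G : {set {set 'I_n}}) L c :
 t <= k ->
 (forall S : {set 'I_n}, #|S| < L -> [set B in G | S \subset B] != set0 ->
    exists A : {set 'I_n}, [/\ #|A| = k, #|S :&: A| < t &
      forall B, B \in G -> S \subset B -> t <= #|B :&: A|]) ->
 (forall S : {set 'I_n}, #|S| = L -> #|[set B in G | S \subset B]| <= c) ->
 forall S : {set 'I_n}, #|S| <= L ->
   #|[set B in G | S \subset B]| <= (k - t + 1) ^ (L - #|S|) * c.
Proof.
move=> tk hbr hbase.
suff H : forall m (S : {set 'I_n}), #|S| + m = L ->
   #|[set B in G | S \subset B]| <= (k - t + 1) ^ m * c.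
  move=> S SL; apply: H; lia.
elim=> [|m IH] S hS.
  by rewrite expn0 mul1n; apply: hbase; lia.
have [e|ne] := eqVneq [set B in G | S \subset B] set0.
  by rewrite e cards0.
have [A [hA hj hG]] := hbr S ltac:(lia) ne.
rewrite expnS -mulnA; apply: (@branch n k t G S A) => // x xS.
apply: IH; rewrite cardsU1 xS; lia.
Qed.

Lemma base n k (G : {set {set 'I_n}}) (S : {set 'I_n}) :
  (forall B, B \in G -> #|B| = k) ->
  #|[set B in G | S \subset B]| <= 'C(n - #|S|, k - #|S|).
Proof.
move=> hk.
set D := [set D : {set 'I_n} | D \subset ~: S & #|D| == k - #|S|].
have sub : [set B in G | S \subset B] \subset (fun D => D :|: S) @: D.
  apply/subsetP => B; rewrite inE => /andP [BG SB].
  apply/imsetP; exists (B :\: S).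
    rewrite inE; apply/andP; split.
      by apply/subsetP => x; rewrite !inE => /andP [].
    have := cardsID S B; rewrite (setIidPr SB) (hk B BG) => <-; apply/eqP; lia.
  apply/setP => x; rewrite !inE; have := subsetP SB x.
  by case: (x \in S); case: (x \in B) => // ->.
apply: (leq_trans (subset_leq_card sub)); apply: (leq_trans (leq_imset_card _ _)).
rewrite cards_draws; have := cardsCs S; rewrite card_ord => ->.
have := max_card S; rewrite card_ord; have := max_card (~: S); rewrite card_ord.
move=> h1 h2.
have -> : n - (n - #|~: S|) = #|~: S| by lia.
by [].
Qed.

Lemma base0 n k (G : {set {set 'I_n}}) (S : {set 'I_n}) :
  (forall B, B \in G -> #|B| = k) -> k < #|S| ->
  #|[set B in G | S \subset B]| = 0.
Proof.
move=> hk hS; apply/eqP; rewrite cards_eq0; apply/eqP/setP => B; rewrite !inE.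
apply/negbTE/negP => /andP [BG SB]; have := subset_leq_card SB; rewrite (hk B BG); lia.
Qed.

Lemma cover_sum n t (G : {set {set 'I_n}}) (T : {set 'I_n}) bnd :
  (forall B, B \in G -> t <= #|T :&: B|) ->
  (forall X : {set 'I_n}, X \subset T -> #|X| = t ->
     #|[set B in G | X \subset B]| <= bnd) ->
  #|G| <= 'C(#|T|, t) * bnd.
Proof.
move=> hT hX.
set D := [set X : {set 'I_n} | X \subset T & #|X| == t].
apply: (@leq_trans (\sum_(B in G) #|[set X in D | X \subset B]|)).
  rewrite -sum1_card; apply: leq_sum => B BG.
  apply: (@leq_trans #|[set X : {set 'I_n} | X \subset T :&: B & #|X| == t]|).
    by rewrite cards_draws bin_gt0 hT.
  apply: subset_leq_card; apply/subsetP => X; rewrite !inE subsetI.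
  by case/andP => /andP [-> ->] ->.
rewrite -dcount -cards_draws -sum_nat_const; apply: leq_sum => X.
by rewrite inE => /andP [XT /eqP Xt]; apply: hX.
Qed.

Lemma bigmin_le (I : finType) (P : pred I) (G : I -> nat) idx j :
  P j -> \big[minn/idx]_(i | P i) G i <= G j.
Proof.
move=> Pj; have : j \in index_enum I := mem_index_enum j.
elim: (index_enum I) => // a r IH; rewrite inE big_cons => /predU1P [<-|jr].
  by rewrite Pj geq_minl.
case: (P a); last exact: IH.
by rewrite geq_min IH // orbT.
Qed.

Lemma tau_min n t (F : {set {set 'I_n}}) S : t_cover t F S -> tau_t t F <= #|S|.
Proof. by move=> cS; rewrite /tau_t; apply: bigmin_le. Qed.

Lemma tau_ge n t (F : {set {set 'I_n}}) (T : {set 'I_n}) :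
  (forall S, t_cover t F S -> #|T| <= #|S|) -> #|T| <= tau_t t F.
Proof.
move=> Tmin; rewrite /tau_t; apply: (big_ind (fun v => #|T| <= v)).
- by have := max_card T; rewrite card_ord.
- by move=> x y h1 h2; rewrite leq_min h1 h2.
- by move=> S cS; apply: Tmin.
Qed.

Theorem lemma3p2 (n k t : nat) (F : {set {set 'I_n}}) :
  t + 3 <= k ->
  (k - t) * (k - t + 1) + t <= n ->
  (forall A, A \in F -> #|A| = k) ->
  t_intersecting t F ->
  let tau := tau_t t F in
  #|F| <= (k - t + 1) ^ (tau - t) * 'C(tau, t) * 'C(n - tau, k - tau)
  /\
  (forall B : {set {set 'I_n}}, B \subset F ->
     (forall A, A \in B -> forall S, S \in T_t t F -> ~~ (S \subset A)) ->
     #|B| <= (k - t + 1) ^ (tau - t + 1) * 'C(tau, t)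
             * binz (n - tau - 1) (k%:Z - tau%:Z - 1)%R).
Proof.
move=> tk hn hk hint tau.
have tk' : t <= k by lia.
have hI : forall A B, A \in F -> B \in F -> t <= #|A :&: B|.
  move=> A B AF BF; move/forallP: hint => /(_ A); rewrite AF /=.
  by move/forallP => /(_ B); rewrite BF.
have cmin : forall S, t_cover t F S -> tau <= #|S|.
  by move=> S cS; apply: tau_min.
have ncov : forall S, ~~ t_cover t F S -> exists2 A, A \in F & #|S :&: A| < t.
  move=> S /forallPn [A]; rewrite negb_imply -ltnNge => /andP [AF h].
  by exists A.
have [T cT Tt] : exists2 T, t_cover t F T & #|T| = tau.
  have cT : t_cover t F setT.
    by apply/forallP => A; apply/implyP => AF; rewrite setTI hk.
  case: (@arg_minnP _ setT (t_cover t F) (fun S => #|S|) cT) => T cT' Tmin.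
  exists T => //; apply/eqP; rewrite eqn_leq cmin // andbT.
  exact: tau_ge.
have hTc : forall B, B \in F -> t <= #|T :&: B|.
  by move=> B BF; move/forallP: cT => /(_ B); rewrite BF.
have [F0|[A0 A0F]] := set_0Vmem F.
  split; first by rewrite F0 cards0.
  by move=> B; rewrite F0 subset0 => /eqP -> _; rewrite cards0.
have ttau : t <= tau by rewrite -Tt; apply: leq_trans (hTc A0 A0F) _; apply: subset_leq_card; apply: subsetIl.
split.
  rewrite mulnC mulnA; rewrite -Tt mulnC; apply: cover_sum => // X XT Xt.
  rewrite Tt mulnC; have -> : tau - t = tau - #|X| by rewrite Xt.
  apply: grow => //.
  - move=> S Stau _; have : ~~ t_cover t F S by apply/negP => /cmin; lia.
    move=> /ncov [A AF hA]; exists A; split => //; first exact: hk.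
    by move=> B BF _; rewrite setIC; apply: hI.
  - by move=> S <-; apply: base.
  - by rewrite -Tt; apply: subset_leq_card.
move=> B BF hB.
have hkB : forall A, A \in B -> #|A| = k by move=> A AB; apply: hk; apply: (subsetP BF).
rewrite mulnC mulnA; rewrite -Tt mulnC; apply: cover_sum.
  by move=> C CB; apply: hTc; apply: (subsetP BF).
move=> X XT Xt.
rewrite Tt mulnC; have -> : tau - t + 1 = tau + 1 - #|X| by lia.
apply: grow => //.
- move=> S Stau ne.
  case: (set_0Vmem [set C in B | S \subset C]) => [e|[B0]]; first by rewrite e eqxx in ne.
  rewrite inE => /andP [B0B SB0].
  have : ~~ t_cover t F S.
    apply/negP => cS; have := cmin S cS => h.
    have e : #|S| = tau by lia.
    have : S \in T_t t F by rewrite inE cS /= e.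
    by move=> /(hB B0 B0B); rewrite SB0.
  move=> /ncov [A AF hA]; exists A; split => //; first exact: hk.
  by move=> C CB _; rewrite setIC; apply: hI => //; apply: (subsetP BF).
- move=> S hS.
  have [ktau|ktau] := ltnP k (tau + 1).
    by rewrite (@base0 n k) // hS.
  have -> : (k%:Z - tau%:Z - 1)%R = Posz (k - tau - 1) by lia.
  rewrite /binz; have -> : n - tau - 1 = n - #|S| by rewrite hS; lia.
  have -> : k - tau - 1 = k - #|S| by rewrite hS; lia.
  exact: base.
- have := subset_leq_card XT; lia.
Qed.
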